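(* Let $t\in[0,T]$ and let $X\in\mathbb{L}^\infty(\mathbb{R},\mathcal{F}_T)$ be such that $X>0$ a.s. Then there exists a unique $Z_t\in\mathbb{L}^0(\mathbb{R},\mathcal{F}_t)$ with $\operatorname{ess\,sup}_{\mathcal{F}_0}(Z_t)\in\mathbb{R}$ a.s. that satisfies $$\operatorname{ess\,sup}_{\mathcal{F}_0}(Z_t1_{F_t})=\operatorname{ess\,sup}_{\mathcal{F}_0}(X1_{F_t})\quad\text{for all }F_t\in\mathcal{F}_t.$$
   Context: Let $(\Omega,\mathcal{F},\mathbb{P})$ be a complete probability space and $(\mathcal{F}_t)_{t\in[0,T]}$ a filtration of complete sub-$\sigma$-algebras of $\mathcal{F}$ ($\mathcal{F}_s\subseteq\mathcal{F}_t$ for $s\le t$). $\mathbb{L}^0(G,\mathcal{G})$ denotes the $\mathcal{G}$-measurable random variables a.s. valued in $G$ and $\mathbb{L}^\infty(G,\mathcal{G})$ the essentially bounded ones. For a sub-$\sigma$-algebra $\mathcal{G}$, $\operatorname{ess\,sup}_{\mathcal{G}}(Y)$ is the smallest (a.s.) $\mathcal{G}$-measurable $\overline{\mathbb{R}}$-valued random variable dominating $Y$ a.s. *)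

(* Defs.v *)
From HB Require Import structures.
From mathcomp Require Import all_boot all_order all_algebra.
From mathcomp Require Import all_classical all_reals all_analysis measurable_realfun.
Set Implicit Arguments. Unset Strict Implicit. Unset Printing Implicit Defensive.
Import Order.TTheory GRing.Theory Num.Theory.
Local Open Scope classical_set_scope.
Local Open Scope ring_scope.

Definition is_sub_sigma_alg d (T : measurableType d) (G : set (set T)) :=
  sigma_algebra setT G /\ G `<=` measurable.

Definition complete_wrt d (T : measurableType d) (R : realType)
  (P : probability T R) (G : set (set T)) :=
  P.-negligible `<=` G.

Definition G_measurable d (T : measurableType d) (R : realType)
  (G : set (set T)) (f : T -> R) :=
  forall B : set R, measurable B -> G (f @^-1` B).

Definition G_emeasurable d (T : measurableType d) (R : realType)
  (G : set (set T)) (f : T -> \bar R) :=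
  forall B : set (\bar R), measurable B -> G (f @^-1` B).

Definition is_cond_ess_sup d (T : measurableType d) (R : realType)
  (P : probability T R) (G : set (set T)) (Y : T -> R) (S : T -> \bar R) :=
  [/\ G_emeasurable G S,
      {ae P, forall x, ((Y x)%:E <= S x)%E} &
      forall S' : T -> \bar R, G_emeasurable G S' ->
        {ae P, forall x, ((Y x)%:E <= S' x)%E} ->
        {ae P, forall x, (S x <= S' x)%E}].

Definition mul_ind d (T : measurableType d) (R : realType)
  (Y : T -> R) (F : set T) : T -> R :=
  fun x => Y x * \1_F x.

(* Main.v *)
Require Import Defs.
From HB Require Import structures.
From mathcomp Require Import all_boot all_order all_algebra.
From mathcomp Require Import all_classical all_reals all_analysis measurable_realfun.
From mathcomp Require Import lra.
Import Order.TTheory GRing.Theory Num.Theory.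
Local Open Scope classical_set_scope.
Local Open Scope ring_scope.
Lemma bigcup_rat_nat (T : Type) (F : rat -> set T) :
  \bigcup_q F q = \bigcup_n (oapp F set0 (unpickle n)).
Proof.
apply/seteqP; split => x.
  move=> [q _ Fx]; exists (pickle q); first by [].
  by rewrite pickleK.
move=> [n _]; case: (unpickle n) => [q Fx|[]]; by exists q.
Qed.

Lemma sigma_bigcup_rat (T : Type) (G : set (set T)) (F : rat -> set T) :
  sigma_algebra setT G -> (forall q, G (F q)) -> G (\bigcup_q F q).
Proof.
move=> [G0 _ GU] GF; rewrite bigcup_rat_nat; apply: GU => n.
by case: (unpickle n) => [q|]; [exact: GF|exact: G0].
Qed.

Lemma negligible_bigcup_rat d (T : measurableType d) (R : realType)
  (mu : {measure set T -> \bar R}) (F : rat -> set T) :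
  (forall q, mu.-negligible (F q)) -> mu.-negligible (\bigcup_q F q).
Proof.
move=> hF; rewrite bigcup_rat_nat; apply: negligible_bigcup => n.
case: (unpickle n) => [q|]; first exact: hF.
exact: negligible_set0.
Qed.

Lemma erat_dense (R : realType) (a b : \bar R) : (a < b)%E ->
  exists q : rat, (a < (ratr q)%:E)%E /\ ((ratr q)%:E < b)%E.
Proof.
have H (x y : R) : x < y -> exists q : rat, x < ratr q /\ ratr q < y.
  by move=> /rat_in_itvoo [q]; rewrite in_itv /= => /andP[? ?]; exists q.
case: a => [a||]; case: b => [b||] //=.
- by rewrite lte_fin => /H [q [? ?]]; exists q; rewrite !lte_fin.
- move=> _; have [q [? ?]] := H a (a + 1) ltac:(by rewrite ltrDl ltr01).
  by exists q; rewrite lte_fin ltry.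
- move=> _; have [q [? ?]] := H (b - 1) b ltac:(by rewrite ltrBlDr ltrDl ltr01).
  by exists q; rewrite lte_fin ltNyr.
- by move=> _; exists 0; rewrite ltNyr ltry.
Qed.

Lemma Gemeas_of_lt d (T : measurableType d) (R : realType) (G : set (set T))
  (S : T -> \bar R) : sigma_algebra setT G ->
  (forall r : R, G [set x | (S x < r%:E)%E]) -> G_emeasurable G S.
Proof.
move=> sG h B mB.
pose GT := g_sigma_algebraType G.
have mS : measurable_fun (setT : set GT) S.
  apply: (measurability _ (ErealGenInftyO.measurableE R)) => _ /= -[_ [r ->] <-].
  rewrite setTI preimage_itvNyo; apply: sub_sigma_algebra; exact: h.
have := mS measurableT B mB; rewrite setTI => H.
by rewrite -(sigma_algebra_id sG); exact: H.
Qed.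
Lemma sigmaU (T : Type) (G : set (set T)) A B :
  sigma_algebra setT G -> G A -> G B -> G (A `|` B).
Proof.
move=> [G0 _ GU] GA GB; rewrite -bigcup2E; apply: GU => n.
by rewrite /bigcup2; case: ifP => _; [|case: ifP].
Qed.

Lemma probfin d (T : measurableType d) (R : realType) (P : probability T R) A :
  measurable A -> P A = (fine (P A))%:E.
Proof.
move=> mA; rewrite fineK // ge0_fin_numE //.
exact: (le_lt_trans (probability_le1 P mA) (ltry _)).
Qed.

Arguments probfin {d T R} P {A}.

Lemma aeE d (T : measurableType d) (R : realType) (mu : {measure set T -> \bar R}) (Q : T -> Prop) :
  {ae mu, forall x, Q x} = mu.-negligible (~` [set x | Q x]).
Proof. by []. Qed.


Section ess.
Context d (T : measurableType d) (R : realType) (P : probability T R) (G : set (set T)).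
Hypotheses (sG : sigma_algebra setT G) (GM : G `<=` measurable).
Variable Y : T -> R.
Hypothesis mY : measurable_fun setT Y.

Lemma mlt q : measurable [set x | q < Y x].
Proof.
by have := mY measurableT _ (measurable_itv `]q, +oo[); rewrite setTI preimage_itvoy.
Qed.

Definition Cq q B := G B /\ P (B `&` [set x | q < Y x]) = 0.

Lemma maxset q : exists B, Cq q B /\ forall B', Cq q B' -> P (B' `\` B) = 0.
Proof.
pose m := ereal_sup [set P B | B in Cq q].
have C0 : Cq q set0 by split; [case: sG|rewrite set0I measure0].
have m0 : (0 <= m)%E.
  by apply: ereal_sup_ubound; exists set0 => //; rewrite measure0.
have m1 : (m <= (1%R)%:E)%E.
  apply: ge_ereal_sup => _ [B [GB _] <-].
  exact: (probability_le1 P (GM _ GB)).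
have mfin : m \is a fin_num.
  by rewrite ge0_fin_numE // (le_lt_trans m1) // ltry.
have hn : forall n : nat, exists B, Cq q B /\ (m - (n.+1%:R^-1)%:E < P B)%E.
  move=> n; have : (m - (n.+1%:R^-1)%:E < m)%E.
    by rewrite -(fineK mfin) -EFinB lte_fin ltrBlDr ltrDl invr_gt0 ltr0n.
  by move=> /ereal_sup_gt [_ [B CB <-] hB]; exists B.
have [Bn hBn] := choice hn.
pose Bs := \bigcup_n Bn n.
have GBn n : G (Bn n) by case: (hBn n) => [[]].
have mBn n : measurable (Bn n) := GM _ (GBn n).
have CBs : Cq q Bs.
  split; first by case: sG => _ _; apply.
  rewrite setI_bigcupl; apply/negligibleP.
    by apply: bigcupT_measurable => n; apply: measurableI => //; exact: mlt.
  apply: negligible_bigcup => n; apply/negligibleP.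
    by apply: measurableI => //; exact: mlt.
  by case: (hBn n) => [[]].
have mBs : measurable Bs := GM _ CBs.1.
exists Bs; split => // B' [GB' hB'].
have mB' : measurable B' := GM _ GB'.
have CU : Cq q (Bs `|` B').
  split; first by apply: sigmaU => //; exact: CBs.1.
  rewrite setIUl; apply/negligibleP.
    by apply: measurableU; apply: measurableI => //; exact: mlt.
  apply: negligibleU; apply/negligibleP.
  - by apply: measurableI => //; exact: mlt.
  - exact: CBs.2.
  - by apply: measurableI => //; exact: mlt.
  - exact: hB'.
have le : (P (Bs `|` B') <= m)%E by apply: ereal_sup_ubound; exists (Bs `|` B').
have eU : P (Bs `|` B') = (P Bs + P (B' `\` Bs))%E.
  rewrite -measureU //; last 2 first.
  - exact: measurableD.
  - by apply/seteqP; split => x // [] ? [].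
  congr (P _); apply/seteqP; split => x [|]; try by left.
    by move=> B'x; case: (pselect (Bs x)) => ?; [left|right].
  by move=> [? _]; right.
have mD : measurable (B' `\` Bs) by exact: measurableD.
move: le; rewrite eU (probfin P mBs) (probfin P mD) -(fineK mfin) -EFinD lee_fin.
have hb : forall n : nat, fine m - n.+1%:R^-1 < fine (P Bs).
  move=> n; have h1 := (hBn n).2.
  have h2 : (P (Bn n) <= P Bs)%E.
    by apply: le_measure; rewrite ?inE //; exact: bigcup_sup.
  have := lt_le_trans h1 h2.
  by rewrite (probfin P mBs) -(fineK mfin) -EFinB lte_fin.
move=> hle.
have pd0 : 0 <= fine (P (B' `\` Bs)) by apply: fine_ge0; exact: measure_ge0.
congr EFin.
apply/eqP; rewrite eq_le pd0 andbT leNgt; apply/negP => /ltr_add_invr [k].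
rewrite add0r => hk; have := hb k; move: hk hle; set e := k.+1%:R^-1; set pb := fine (P Bs); set pd := fine _; set mm := fine m; lra.
Qed.

Lemma ess_sup_exists : exists S, is_cond_ess_sup P G Y S.
Proof.
have /choice [Bf hBf] := fun q : rat => maxset (ratr q).
pose S : T -> \bar R := fun x => ereal_inf [set (ratr q : R)%:E | q in [set q | Bf q x]].
have Sle q x : Bf q x -> (S x <= (ratr q)%:E)%E.
  by move=> h; apply: ereal_inf_lbound; exists q.
have Slt r x : (S x < r%:E)%E <-> exists q, Bf q x /\ ratr q < r.
  split.
    by move=> /ereal_inf_lt [_ [q Bq <-]]; rewrite lte_fin => h; exists q.
  move=> [q [Bq h]]; apply: (le_lt_trans (Sle q x Bq)); by rewrite lte_fin.
have GBf q : G (Bf q) by case: (hBf q) => [[]].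
exists S; split.
- apply: Gemeas_of_lt => // r.
  have -> : [set x | (S x < r%:E)%E] = \bigcup_q (Bf q `&` [set _ | ratr q < r]).
    apply/seteqP; split => x /=.
      by move=> /Slt [q [? ?]]; exists q.
    by move=> [q _ [? ?]]; apply/Slt; exists q.
  apply: sigma_bigcup_rat => // q.
  case: (boolP (ratr q < r)) => _.
    suff -> : Bf q `&` [set _ | true] = Bf q by [].
    by apply/seteqP; split => x /=; [case|].
  suff -> : Bf q `&` [set _ | false] = set0 by case: sG.
  by apply/seteqP; split => x //= [].
- rewrite aeE.
  apply: (negligibleS _ (@negligible_bigcup_rat _ _ _ P
     (fun q => Bf q `&` [set x | ratr q < Y x]) _)).
    move=> x /= /negP; rewrite -ltNge => /Slt [q [? ?]]; by exists q.
  move=> q; apply/negligibleP.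
    by apply: measurableI; [exact: GM|exact: mlt].
  by case: (hBf q) => [[]].
- move=> S' hS' hdom; rewrite aeE.
  apply: (negligibleS _ (@negligible_bigcup_rat _ _ _ P
     (fun q => [set x | (S' x <= (ratr q)%:E)%E] `\` Bf q) _)).
    move=> x /= /negP; rewrite -ltNge => /erat_dense [q [h1 h2]].
    exists q => //; split; first exact: ltW.
    by move=> /(Sle q x) h3; move: (lt_le_trans h2 h3); rewrite ltxx.
  move=> q.
  have GB' : G [set x | (S' x <= (ratr q)%:E)%E].
    have := hS' _ (emeasurable_itv `]-oo, (ratr q)%:E]).
    by rewrite preimage_itvNyc.
  have C' : Cq (ratr q) [set x | (S' x <= (ratr q)%:E)%E].
    split => //; apply/negligibleP.
      by apply: measurableI; [exact: GM|exact: mlt].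
    move: hdom; rewrite aeE; apply: negligibleS => x /= [h1 h2] h3.
    by move: (le_trans h3 h1); rewrite lee_fin leNgt h2.
  apply/negligibleP; first by apply: measurableD; exact: GM.
  exact: (hBf q).2.
Qed.
End ess.


Set Implicit Arguments.
Unset Strict Implicit.
Section helpers.
Context d (T : measurableType d) (R : realType) (P : probability T R).

Lemma ae_and (A B : T -> Prop) : {ae P, forall x, A x} -> {ae P, forall x, B x} ->
  {ae P, forall x, A x /\ B x}.
Proof.
rewrite !aeE => hA hB; apply: (negligibleS _ (negligibleU hA hB)) => x /= h.
by case: (pselect (A x)) => a; [right => b; exact: h|left].
Qed.

Lemma ae_mono (A B : T -> Prop) : (forall x, A x -> B x) ->
  {ae P, forall x, A x} -> {ae P, forall x, B x}.
Proof.
by move=> AB; rewrite !aeE; apply: negligibleS => x /= nb ax; exact: nb (AB _ ax).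
Qed.

Lemma ae_all (A : T -> Prop) : (forall x, A x) -> {ae P, forall x, A x}.
Proof.
move=> h; rewrite aeE; apply: (negligibleS _ (negligible_set0 P)).
by move=> x /= nA; exact: nA (h x).
Qed.

Lemma G_cst (G : set (set T)) (c : \bar R) : sigma_algebra setT G ->
  G_emeasurable G (fun _ : T => c).
Proof.
move=> [G0 GD _] B _; case: (pselect (B c)) => h.
  have -> : (fun _ : T => c) @^-1` B = setT by apply/seteqP; split.
  by have := GD _ G0; rewrite setD0.
by have -> : (fun _ : T => c) @^-1` B = set0 by apply/seteqP; split.
Qed.

Lemma sigmaT (G : set (set T)) : sigma_algebra setT G -> G setT.
Proof. by move=> [G0 GD _]; rewrite -(setD0 setT); exact: GD. Qed.

Lemma sigmaI (G : set (set T)) A B : sigma_algebra setT G -> G A -> G B -> G (A `&` B).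
Proof.
move=> sG GA GB; have [_ GD _] := sG.
rewrite -(setCK (A `&` B)) setCI -setTD; apply: (GD).
by apply: sigmaU => //; rewrite -setTD; exact: GD.
Qed.

Lemma Gmeas_meas (G : set (set T)) (f : T -> R) : G `<=` measurable ->
  G_measurable G f -> measurable_fun setT f.
Proof. by move=> GM hf _ B mB; rewrite setTI; exact: GM _ (hf B mB). Qed.

Lemma Gmeas_fine (G : set (set T)) (f : T -> \bar R) : G_emeasurable G f ->
  G_measurable G (fun x => fine (f x)).
Proof.
move=> hf B mB; have := fine_measurable measurableT measurableT mB.
by rewrite setTI => h; exact: (hf _ h).
Qed.

Lemma Gpre_le (G : set (set T)) (f : T -> R) c : G_measurable G f ->
  G [set x | f x <= c].
Proof. by move=> hf; have := hf _ (measurable_itv `]-oo, c]); rewrite preimage_itvNyc. Qed.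

Lemma Gpre_lt (G : set (set T)) (f : T -> R) c : G_measurable G f ->
  G [set x | c < f x].
Proof. by move=> hf; have := hf _ (measurable_itv `]c, +oo[); rewrite preimage_itvoy. Qed.

Lemma Gpre_gt (G : set (set T)) (f : T -> R) c : G_measurable G f ->
  G [set x | f x < c].
Proof. by move=> hf; have := hf _ (measurable_itv `]-oo, c[); rewrite preimage_itvNyo. Qed.

Lemma mul_ind_meas (Y : T -> R) F : measurable_fun setT Y -> measurable F ->
  measurable_fun setT (mul_ind Y F).
Proof. by move=> mY mF; apply: measurable_funM => //; exact: measurable_indic. Qed.

Lemma ces_le (G : set (set T)) (Y : T -> R) S1 S2 :
  is_cond_ess_sup P G Y S1 -> is_cond_ess_sup P G Y S2 ->
  {ae P, forall x, (S1 x <= S2 x)%E}.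
Proof. by move=> [_ _ h] [m2 d2 _]; exact: h. Qed.

End helpers.
Theorem mainTheorem18 (d : measure_display) (Omega : measurableType d)
  (R : realType) (P : probability Omega R)
  (Tend : R) (Filt : R -> set (set Omega))
  (P_complete : measure_is_complete P)
  (Filt_sub : forall s, 0 <= s <= Tend -> is_sub_sigma_alg (Filt s))
  (Filt_complete : forall s, 0 <= s <= Tend -> complete_wrt P (Filt s))
  (Filt_mono : forall s u, 0 <= s -> s <= u -> u <= Tend ->
                 Filt s `<=` Filt u)
  (t : R) (ht : 0 <= t <= Tend)
  (X : Omega -> R)
  (X_meas : G_measurable (Filt Tend) X)
  (X_bdd : exists M : R, {ae P, forall w, `|X w| <= M})
  (X_pos : {ae P, forall w, 0 < X w}) :
  (exists Z : Omega -> R,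
     [/\ G_measurable (Filt t) Z,
         (exists S, is_cond_ess_sup P (Filt 0) Z S /\
                    {ae P, forall w, S w \is a fin_num}) &
         forall Ft, Filt t Ft ->
           exists S, is_cond_ess_sup P (Filt 0) (mul_ind Z Ft) S /\
                     is_cond_ess_sup P (Filt 0) (mul_ind X Ft) S]) /\
  (forall Z1 Z2 : Omega -> R,
     G_measurable (Filt t) Z1 ->
     (exists S, is_cond_ess_sup P (Filt 0) Z1 S /\
                {ae P, forall w, S w \is a fin_num}) ->
     (forall Ft, Filt t Ft ->
        exists S, is_cond_ess_sup P (Filt 0) (mul_ind Z1 Ft) S /\
                  is_cond_ess_sup P (Filt 0) (mul_ind X Ft) S) ->
     G_measurable (Filt t) Z2 ->
     (exists S, is_cond_ess_sup P (Filt 0) Z2 S /\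
                {ae P, forall w, S w \is a fin_num}) ->
     (forall Ft, Filt t Ft ->
        exists S, is_cond_ess_sup P (Filt 0) (mul_ind Z2 Ft) S /\
                  is_cond_ess_sup P (Filt 0) (mul_ind X Ft) S) ->
     {ae P, forall w, Z1 w = Z2 w}).
Proof.
have hT : 0 <= Tend by case/andP: ht => h1 h2; exact: le_trans h1 h2.
have h00 : (0:R) <= 0 <= Tend by apply/andP; split.
have hTT : 0 <= Tend <= Tend by apply/andP; split.
have [sF0 GM0] := Filt_sub 0 h00.
have [sFt GMt] := Filt_sub t ht.
have [sFT GMT] := Filt_sub Tend hTT.
have F0t : Filt 0 `<=` Filt t by case/andP: ht => h1 h2; exact: Filt_mono.
have mX : measurable_fun setT X := Gmeas_meas GMT X_meas.
have [M hM] := X_bdd.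
have key : forall Z1 Z2 : Omega -> R, G_measurable (Filt t) Z1 ->
    (forall Ft, Filt t Ft -> exists S, is_cond_ess_sup P (Filt 0) (mul_ind Z1 Ft) S /\
                  is_cond_ess_sup P (Filt 0) (mul_ind X Ft) S) ->
    G_measurable (Filt t) Z2 ->
    (forall Ft, Filt t Ft -> exists S, is_cond_ess_sup P (Filt 0) (mul_ind Z2 Ft) S /\
                  is_cond_ess_sup P (Filt 0) (mul_ind X Ft) S) ->
    {ae P, forall w, Z1 w <= Z2 w}.
  move=> Z1 Z2 mZ1 H1 mZ2 H2.
  have pos2 : {ae P, forall w, 0 < Z2 w}.
    have [S [[_ dZ minZ] [_ dX _]]] := H2 _ (Gpre_le 0 mZ2).
    have S0 : {ae P, forall w, (S w <= (0%R)%:E)%E}.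
      apply: minZ; first exact: G_cst.
      apply: ae_all => w; rewrite /mul_ind lee_fin indicE.
      case: (pselect (Z2 w <= 0)) => h.
        by rewrite mem_set // mulr1.
      by rewrite memNset // mulr0.
    apply: ae_mono (ae_and X_pos (ae_and S0 dX)) => w [xp [s0 dx]].
    rewrite ltNge; apply/negP => hw; have := le_trans dx s0.
    by rewrite /mul_ind indicE mem_set // mulr1 lee_fin leNgt xp.
  have neg : forall q : rat, P.-negligible [set w | Z2 w < ratr q < Z1 w].
    move=> q; have [hq|hq] := ltP (0:R) (ratr q); last first.
      move: pos2; rewrite aeE => hn; apply: (negligibleS _ hn) => w /= /andP[h _] hp.
      by move: (lt_trans hp h); rewrite ltNge hq.
    set F := [set w | Z2 w < ratr q < Z1 w].
    have GF : Filt t F.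
      have -> : F = [set w | Z2 w < ratr q] `&` [set w | ratr q < Z1 w].
        by apply/seteqP; split => w /=; [move/andP|move=> [h1 h2]; apply/andP].
      by apply: sigmaI => //; [exact: Gpre_gt|exact: Gpre_lt].
    have [S1 [[_ d1 _] c1]] := H1 F GF.
    have [S2 [[_ _ min2] c2]] := H2 F GF.
    have S2q : {ae P, forall w, (S2 w <= (ratr q)%:E)%E}.
      apply: min2; first exact: G_cst.
      apply: ae_all => w; rewrite /mul_ind lee_fin indicE.
      case: (pselect (F w)) => h.
        by rewrite mem_set // mulr1; case/andP: h => h _; exact: ltW.
      by rewrite memNset // mulr0; exact: ltW.
    have S12 := ces_le c1 c2.
    have : {ae P, forall w, ~ F w}.
      apply: ae_mono (ae_and d1 (ae_and S12 S2q)) => w [a [b c]] Fw.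
      have := le_trans a (le_trans b c).
      rewrite /mul_ind indicE mem_set // mulr1 lee_fin.
      by case/andP: Fw => _ h; rewrite leNgt h.
    by rewrite aeE => hn; apply: (negligibleS _ hn) => w Fw /= nF; exact: nF.
  rewrite aeE.
  apply: (negligibleS _ (@negligible_bigcup_rat _ _ _ P
     (fun q => [set w | Z2 w < ratr q < Z1 w]) neg)).
  move=> w /= /negP; rewrite -ltNge => /rat_in_itvoo [q]; rewrite in_itv /= => hq.
  by exists q.
have [SZ [SZm SZdom SZmin]] := @ess_sup_exists _ _ _ P _ sFt GMt _ mX.
have SZM : {ae P, forall w, (SZ w <= M%:E)%E}.
  apply: SZmin; first exact: G_cst.
  by apply: ae_mono hM => w h; rewrite lee_fin; exact: le_trans (ler_norm _) h.
pose Z w := fine (SZ w).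
have ZE : {ae P, forall w, SZ w = (Z w)%:E /\ X w <= Z w /\ Z w <= M /\ 0 < Z w}.
  apply: ae_mono (ae_and SZdom (ae_and SZM X_pos)) => w [a [b c]].
  have fin : SZ w \is a fin_num.
    rewrite fin_numElt; apply/andP; split.
      exact: lt_le_trans (ltNyr (X w)) a.
    exact: le_lt_trans b (ltry M).
  have e : SZ w = (Z w)%:E by rewrite /Z fineK.
  move: a b; rewrite e !lee_fin => a b.
  by split => //; split => //; split => //; exact: lt_le_trans c a.
have mZ : G_measurable (Filt t) Z := Gmeas_fine SZm.
have tower : forall F, Filt t F -> exists S,
    is_cond_ess_sup P (Filt 0) (mul_ind Z F) S /\
    is_cond_ess_sup P (Filt 0) (mul_ind X F) S.
  move=> F GF.
  have mF := GMt _ GF.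
  have [S [Sm Sdom Smin]] := @ess_sup_exists _ _ _ P _ sF0 GM0 _ (mul_ind_meas mX mF).
  exists S; split; last by [].
  pose St w := if pselect (F w) then S w else +oo%E.
  have Stm : G_emeasurable (Filt t) St.
    apply: Gemeas_of_lt => // r.
    have -> : [set w | (St w < r%:E)%E] = F `&` [set w | (S w < r%:E)%E].
      apply/seteqP; split => w; rewrite /St /=; case: pselect => h //=;
        by case.
    apply: sigmaI => //; apply: F0t.
    by have := Sm _ (emeasurable_itv `]-oo, r%:E[); rewrite preimage_itvNyo.
  have Stdom : {ae P, forall w, ((X w)%:E <= St w)%E}.
    apply: ae_mono Sdom => w; rewrite /St /mul_ind; case: pselect => h.
      by rewrite indicE mem_set // mulr1.
    by move=> _; rewrite leey.
  have hSt := SZmin _ Stm Stdom.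
  split => //.
  - apply: ae_mono (ae_and ZE (ae_and hSt Sdom)) => w [[e _] [a b]].
    rewrite /mul_ind indicE; case: (pselect (F w)) => h.
      rewrite mem_set // mulr1 -e; move: a; rewrite /St; case: pselect => //.
    by rewrite memNset // mulr0; move: b; rewrite /mul_ind indicE memNset // mulr0.
  - move=> S' S'm S'dom; apply: Smin => //.
    apply: ae_mono (ae_and ZE S'dom) => w [[_ [xz _]] h]; apply: le_trans h.
    by rewrite lee_fin /mul_ind; apply: ler_wpM2r => //; rewrite indicE ler0n.
split.
- exists Z; split => //.
  have [S [c1 c2]] := tower setT (sigmaT sFt).
  have eZ : mul_ind Z setT = Z.
    by apply/funext => w; rewrite /mul_ind indicT /= mulr1.
  rewrite eZ in c1; exists S; split => //.
  have [_ Sdom Smin] := c1.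
  have SM : {ae P, forall w, (S w <= M%:E)%E}.
    apply: Smin; first exact: G_cst.
    by apply: ae_mono ZE => w [_ [_ [zm _]]]; rewrite lee_fin.
  apply: ae_mono (ae_and Sdom SM) => w [a b].
  rewrite fin_numElt; apply/andP; split.
    exact: lt_le_trans (ltNyr _) a.
  exact: le_lt_trans b (ltry _).
- move=> Z1 Z2 m1 _ H1 m2 _ H2.
  apply: ae_mono (ae_and (key _ _ m1 H1 m2 H2) (key _ _ m2 H2 m1 H1)) => w [a b].
  by apply/eqP; rewrite eq_le a b.
Qed.
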